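(* The number of $n$-dimensional realizable Matoušek-type USOs is $2^n\cdot(n+1)^{n-1}$, which lies in $2^{\Theta(n\log n)}$.
   Context: All vectors and matrices are over $GF(2)$; $\oplus$ denotes xor. An orientation of the $n$-dimensional hypercube $\{0,1\}^n$ is given by an outmap $o:\{0,1\}^n\to\{0,1\}^n$, the edge $\{v,v\oplus e_i\}$ being directed away from $v$ iff $o(v)_i=1$. An $n$-dimensional Matoušek-type USO is an orientation $o(v)=M(v\oplus s)$ where $M=PAP^T$ for a permutation matrix $P$ and an invertible upper-triangular $A\in\{0,1\}^{n\times n}$, and $s\in\{0,1\}^n$. Its dimension influence graph is the directed graph on $[n]$ with edge $(i,j)$ iff $M_{j,i}=1$. A USO is realizable if it arises from the (Stickney–Watson) reduction of some non-degenerate P-matrix Linear Complementarity Problem instance to USO sink-finding; it is known that a Matoušek-type USO is realizable iff its dimension influence graph is the reflexive transitive closure of a branching (a forest of rooted trees with edges directed away from the roots). *)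

(* Defs.v *)
From HB Require Import structures.
From mathcomp Require Import all_boot all_order all_algebra all_fingroup.
From Stdlib Require Rdefinitions.
From mathcomp Require Import Rstruct.
Set Implicit Arguments. Unset Strict Implicit. Unset Printing Implicit Defensive.
Import Order.TTheory GRing.Theory Num.Theory.
Local Open Scope ring_scope.

(* Vertices of the n-cube {0,1}^n are column vectors over GF(2) = 'F_2;
   xor is addition in 'F_2.  An orientation is given by its outmap. *)
Definition vertex (n : nat) := 'cV['F_2]_n.
Definition outmap (n : nat) := {ffun vertex n -> vertex n}.

Definition upper_triangular n (A : 'M['F_2]_n) : Prop :=
  forall i j : 'I_n, (j < i)%N -> A i j = 0.

Definition matousek_type n (o : outmap n) : Prop :=
  exists (sigma : 'S_n) (A : 'M['F_2]_n) (s : vertex n),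
    [/\ upper_triangular A, A \in unitmx &
        forall v : vertex n,
          o v = (perm_mx sigma *m A *m (perm_mx sigma)^T) *m (v + s)].

Definition principal_minor n (M : 'M[Rdefinitions.R]_n) (S : {set 'I_n}) : Rdefinitions.R :=
  \det (mxsub (@enum_val _ (mem S)) (@enum_val _ (mem S)) M).

Definition P_matrix n (M : 'M[Rdefinitions.R]_n) : Prop :=
  forall S : {set 'I_n}, 0 < principal_minor M S.

(* LCP(M,q): w - M z = q, w, z >= 0, w^T z = 0.  For a vertex v, the
   complementary basis takes z_i as basic variable if v_i = 1 and w_i
   otherwise; its basis matrix has column -M_{.,i} resp. e_i. *)
Definition basis_mx n (M : 'M[Rdefinitions.R]_n) (v : vertex n) : 'M[Rdefinitions.R]_n :=
  \matrix_(i < n, j < n) (if v j 0 == 1 then - M i j else (i == j)%:R).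

Definition basic_sol n (M : 'M[Rdefinitions.R]_n) (q : 'cV[Rdefinitions.R]_n) (v : vertex n) : 'cV[Rdefinitions.R]_n :=
  invmx (basis_mx M v) *m q.

Definition nondegenerate n (M : 'M[Rdefinitions.R]_n) (q : 'cV[Rdefinitions.R]_n) : Prop :=
  forall v : vertex n,
    basis_mx M v \in unitmx /\ forall i : 'I_n, basic_sol M q v i 0 != 0.

(* Stickney-Watson USO: the edge in direction i is outgoing from v iff the
   i-th basic variable at v is negative (the sink is the LCP solution). *)
Definition stickney_watson n (M : 'M[Rdefinitions.R]_n) (q : 'cV[Rdefinitions.R]_n) : outmap n :=
  [ffun v : vertex n => \col_(i < n) (if basic_sol M q v i 0 < 0 then 1 else 0 : 'F_2)].

Definition realizable n (o : outmap n) : Prop :=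
  exists (M : 'M[Rdefinitions.R]_n) (q : 'cV[Rdefinitions.R]_n),
    [/\ P_matrix M, nondegenerate M q & o = stickney_watson M q].

(* Main.v *)
Require Import Defs.
From HB Require Import structures.
From mathcomp Require Import all_boot all_order all_algebra all_fingroup.
From Stdlib Require Rdefinitions.
From mathcomp Require Import Rstruct.
From mathcomp Require Import ring lra zify.
Set Implicit Arguments. Unset Strict Implicit. Unset Printing Implicit Defensive.


Definition hcount m r := if m is 0 then 1 else r * (m + r) ^ m.-1.

Lemma hcount_rec m r : \sum_(k < m.+2) 'C(m.+1, k) *
    (if (k : nat) == 0 then 0 else r ^ k * hcount (m.+1 - k) k) = r * (m.+1 + r) ^ m.
Proof.
rewrite big_ord_recl /= muln0 add0n expnDn big_distrr /=.
apply: eq_bigr => i _; rewrite /bump /= add1n subSS.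
have := ltn_ord i; rewrite ltnS leq_eqVlt => /orP[/eqP ei|lt].
  rewrite ei subnn !binn /= expn0 expnS; ring.
have [d ed] : exists d, m - i = d.+1 by exists (m - i).-1; rewrite prednK // subn_gt0.
rewrite ed /=.
have e2 : d.+1 + i.+1 = m.+1 by rewrite addnS -ed subnK // ltnW.
rewrite e2.
have hb := mul_bin_diag m.+1 i.
transitivity ((i.+1 * 'C(m.+1,i.+1)) * (r ^ i.+1 * m.+1 ^ d)); first ring.
rewrite -hb !expnS /=; ring.
Qed.

Section Count.
Variable T : finType.
Implicit Types (A R B : {set T}) (E : {set T * T}).

Record Gprop A R E : Prop := GProp {
  g1a : forall x y, (x,y) \in E -> y \in A;
  g1b : forall x y, (x,y) \in E -> x \in A :|: R;
  g2 : forall x, (x,x) \notin E;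
  g3 : forall x y z, (x,y) \in E -> (y,z) \in E -> (x,z) \in E;
  g4 : forall x y z, (x,z) \in E -> (y,z) \in E -> x != y ->
         ((x,y) \in E) || ((y,x) \in E);
  g5 : forall z, z \in A -> exists2 r, r \in R & (r,z) \in E }.

Definition Gpred A R E :=
  [&& [forall x, forall y, ((x,y) \in E) ==> (y \in A) && (x \in A :|: R)],
   [forall x, (x,x) \notin E],
   [forall x, forall y, forall z, ((x,y) \in E) ==> ((y,z) \in E) ==> ((x,z) \in E)],
   [forall x, forall y, forall z, ((x,z) \in E) ==> ((y,z) \in E) ==> (x != y) ==>
        ((x,y) \in E) || ((y,x) \in E)] &
   [forall z, (z \in A) ==> [exists r, (r \in R) && ((r,z) \in E)]]].

Lemma GP A R E : reflect (Gprop A R E) (Gpred A R E).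
Proof.
apply: (iffP and5P) =>
  [[/forallP h1 /forallP h2 /forallP h3 /forallP h4 /forallP h5]|[h1 h1' h2 h3 h4 h5]].
  constructor.
  - by move=> x y /(implyP (forallP (h1 x) y)) /andP[].
  - by move=> x y /(implyP (forallP (h1 x) y)) /andP[].
  - exact: h2.
  - move=> x y z Hxy Hyz; move/forallP: (h3 x) => /(_ y) /forallP /(_ z).
    by rewrite Hxy Hyz.
  - move=> x y z Hxz Hyz Hxy; move/forallP: (h4 x) => /(_ y) /forallP /(_ z).
    by rewrite Hxz Hyz Hxy.
  - move=> z zA; move/implyP: (h5 z) => /(_ zA) /existsP[r /andP[rR rz]].
    by exists r.
split.
- apply/forallP=> x; apply/forallP=> y; apply/implyP=> Hxy.
  by rewrite (h1 _ _ Hxy) (h1' _ _ Hxy).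
- by apply/forallP.
- apply/forallP=> x; apply/forallP=> y; apply/forallP=> z.
  apply/implyP=> H1; apply/implyP=> H2; exact: h3 _ _ _ H1 H2.
- apply/forallP=> x; apply/forallP=> y; apply/forallP=> z.
  apply/implyP=> H1; apply/implyP=> H2; apply/implyP=> H3; exact: h4 _ _ _ H1 H2 H3.
- apply/forallP=> z; apply/implyP=> zA; have [r rR rz] := h5 z zA.
  by apply/existsP; exists r; rewrite rR rz.
Qed.

Definition Gset A R := [set E | Gpred A R E].

Lemma inGset A R E : (E \in Gset A R) <-> Gprop A R E.
Proof. by rewrite inE; split => /GP. Qed.

Definition rootsE A R E := [set b in A | [forall a, ((a,b) \in E) ==> (a \in R)]].

Lemma rootsP A R E b : reflect (b \in A /\ forall a, (a,b) \in E -> a \in R)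
  (b \in rootsE A R E).
Proof.
rewrite inE; apply: (iffP andP) => [[bA /forallP h]|[bA h]].
  by split=> // a; apply/implyP.
by split=> //; apply/forallP=> a; apply/implyP; apply: h.
Qed.

Lemma root_below A R E : Gprop A R E -> forall z, z \in A ->
  exists2 b, b \in rootsE A R E & (b == z) || ((b,z) \in E).
Proof.
move=> G z.
have [n] := ubnP #|[set a | (a,z) \in E]|; elim: n z => // n IH z Hlt zA.
case: (boolP (z \in rootsE A R E)) => [zr|]; first by exists z; rewrite ?eqxx.
rewrite inE zA /= negb_forall => /existsP[a]; rewrite negb_imply => /andP[az aR].
have aA : a \in A by move: (g1b G az); rewrite inE (negbTE aR) orbF.
have sub : [set a' | (a',a) \in E] \proper [set a' | (a',z) \in E].
  apply/properP; split.
    apply/subsetP => a'; rewrite !inE => h. exact (g3 G h az).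
  by exists a; rewrite !inE ?(g2 G).
have [b br hb] := IH a (leq_trans (proper_card sub) Hlt) aA.
exists b => //; case/orP: hb => [/eqP ->|ba]; first by rewrite az orbT.
by rewrite (g3 G ba az) orbT.
Qed.

Definition Phi B (f : {ffun T -> T}) E' : {set T * T} :=
  E' :|: [set (f b, b) | b in B] :|: [set (f p.1, p.2) | p in [set p in E' | p.1 \in B]].

Lemma inPhi B f E' x y : (x,y) \in Phi B f E' <->
  [\/ (x,y) \in E', (y \in B /\ x = f y) | exists2 b, b \in B & ((b,y) \in E' /\ x = f b)].
Proof.
rewrite !inE; split.
  case/orP => [/orP[H|/imsetP[b bB [-> ->]]]|/imsetP[[b c] ]].
  - by constructor 1.
  - by constructor 2.
  - rewrite inE /= => /andP[bc bB] [-> ->]; constructor 3; by exists b.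
case=> [->//|[yB ->]|[b bB [by_ ->]]].
  by rewrite (imset_f (fun b => (f b, b)) yB) orbT.
apply/orP; right; apply/imsetP; exists (b,y) => //.
by rewrite inE /= by_ bB.
Qed.

Opaque Phi.

Lemma pff_out y0 B R (f : {ffun T -> T}) x :
  f \in pffun_on y0 B R -> x \notin B -> f x = y0.
Proof.
case/pffun_onP => /subsetP sub _ xB; apply/eqP; apply: contraNT xB => h.
exact: sub.
Qed.

Lemma pff_in y0 B R (f : {ffun T -> T}) x :
  f \in pffun_on y0 B R -> x \in B -> f x \in R.
Proof. by case/pffun_onP => _ sub xB; apply: sub; apply: image_f. Qed.

Lemma pff_intro y0 B R (f : {ffun T -> T}) :
  (forall x, x \notin B -> f x = y0) -> (forall x, x \in B -> f x \in R) ->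
  f \in pffun_on y0 B R.
Proof.
move=> h1 h2; apply/pffun_onP; split.
  apply/subsetP => x; rewrite inE; apply: contraR => /h1 ->; by rewrite eqxx.
by move=> y /imageP[x xB ->]; apply: h2.
Qed.

Section Decomp.
Variables (A R B : {set T}) (y0 : T).
Hypothesis dAR : [disjoint A & R].
Hypothesis BA : B \subset A.

Lemma nAR x : x \in A -> x \in R -> False.
Proof. by move=> xA xR; move/disjointFr: dAR => /(_ x xA); rewrite xR. Qed.

Lemma ABA : (A :\: B) :|: B = A.
Proof.
apply/setP => x; rewrite !inE; case: (boolP (x \in B)) => xB /=.
  by rewrite ?orbT (subsetP BA x xB).
by rewrite ?orbF ?andbT.
Qed.

Lemma Phi_G f E' : f \in pffun_on y0 B R -> Gprop (A :\: B) B E' ->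
  Gprop A R (Phi B f E') /\ rootsE A R (Phi B f E') = B.
Proof.
move=> pf G.
have fR b : b \in B -> f b \in R by apply: pff_in pf.
have BA' b : b \in B -> b \in A by move/(subsetP BA).
have tgt x y : (x,y) \in E' -> y \in A /\ y \notin B.
  by move/(g1a G); rewrite inE => /andP[-> ->].
have src x y : (x,y) \in E' -> x \in A.
  by move/(g1b G); rewrite ABA.
have P1a x y : (x,y) \in Phi B f E' -> y \in A.
  by case/inPhi => [/tgt[]//|[/BA']//|[b _ [/tgt[]]]].
have P1b x y : (x,y) \in Phi B f E' -> x \in R -> (y \in B /\ x = f y) \/
     exists2 b, b \in B & ((b,y) \in E' /\ x = f b).
  case/inPhi => [/src xA xR|h|h] ; [by case: (nAR xA xR)|by left|by right].
have P1c x y : (x,y) \in Phi B f E' -> x \in A -> (x,y) \in E'.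
  case/inPhi => [//|[yB ->] /nAR[]|[b bB [_ ->]] /nAR[]]; exact: fR.
have PE p : p \in E' -> p \in Phi B f E' by case: p => x y h; apply/inPhi; constructor 1.
have notB x y : (x,y) \in E' -> y \in B -> False by move=> /tgt[_ /negP].
split; last first.
  apply/setP => z; apply/rootsP/idP => [[zA h]|zB].
    apply: contraT => zB; have zA' : z \in A :\: B by rewrite inE zB.
    have [b bB bz] := g5 G zA'.
    by case: (nAR (BA' _ bB) (h _ (PE _ bz))).
  split; first exact: BA'.
  by move=> a /inPhi[/notB/(_ zB)//|[_ ->]|[b _ [/notB/(_ zB)]]]; [exact: fR|].
constructor.
- exact: P1a.
- move=> x y /inPhi[/src xA|[yB ->]|[b bB [_ ->]]]; rewrite inE ?xA ?fR ?orbT //.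
- move=> x; apply/negP => /inPhi[|[xB xE]|[b bB [bx xE]]]; first by rewrite (negbTE (g2 G x)).
    by apply: (nAR (BA' _ xB)); rewrite xE fR.
  by case: (tgt _ _ bx) => xA _; apply: (nAR xA); rewrite xE fR.
- move=> x y z Hxy Hyz.
  have yA := P1a _ _ Hxy.
  have {}Hyz := P1c _ _ Hyz yA.
  case/inPhi: Hxy => [Hxy|[yB ->]|[b bB [by_ ->]]].
  + by apply/inPhi; constructor 1; exact (g3 G Hxy Hyz).
  + by apply/inPhi; constructor 3; exists y.
  + by apply/inPhi; constructor 3; exists b => //; split=> //; exact (g3 G by_ Hyz).
- move=> x y z Hxz Hyz Hxy.
  case: (boolP (z \in B)) => zB.
    move: Hxz Hyz Hxy => /inPhi[/notB/(_ zB)//|[_ ->]|[b _ [/notB/(_ zB)//]]].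
    by move=> /inPhi[/notB/(_ zB)//|[_ ->]|[b _ [/notB/(_ zB)//]]]; rewrite eqxx.
  have case13 u w b : (u,z) \in E' -> b \in B -> (b,z) \in E' -> w = f b ->
       ((u,w) \in Phi B f E') || ((w,u) \in Phi B f E').
    move=> uz bB bz ->; apply/orP; right; apply/inPhi.
    case: (eqVneq u b) => [->|ub]; first by constructor 2.
    case/orP: (g4 G uz bz ub) => [/notB/(_ bB)//|bu].
    by constructor 3; exists b.
  have nz u : (u,z) \in Phi B f E' -> (u,z) \in E' \/
      exists2 b, b \in B & ((b,z) \in E' /\ u = f b).
    by move=> /inPhi[h|[zB' _]|h]; [left|rewrite zB' in zB|right].
  move: Hxy; case: (nz _ Hxz) => [xz|[b bB [bz ->]]];
     case: (nz _ Hyz) => [yz|[b' bB' [b'z ->]]] Hxy.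
  + by case/orP: (g4 G xz yz Hxy) => h; apply/orP; [left|right]; apply: PE.
  + exact: case13 xz bB' b'z _.
  + by rewrite orbC; exact: case13 yz bB bz _.
  + case: (eqVneq b b') => [eb|nb]; first by rewrite eb eqxx in Hxy.
    by case/orP: (g4 G bz b'z nb) => /notB; [move/(_ bB')|move/(_ bB)].
- move=> z zA; case: (boolP (z \in B)) => zB.
    by exists (f z); [exact: fR|apply/inPhi; constructor 2].
  have zA' : z \in A :\: B by rewrite inE zB.
  have [b bB bz] := g5 G zA'.
  by exists (f b); [exact: fR|apply/inPhi; constructor 3; exists b].
Qed.

Lemma Phi_inj f1 E1 f2 E2 :
  f1 \in pffun_on y0 B R -> Gprop (A :\: B) B E1 ->
  f2 \in pffun_on y0 B R -> Gprop (A :\: B) B E2 ->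
  Phi B f1 E1 = Phi B f2 E2 -> f1 = f2 /\ E1 = E2.
Proof.
move=> p1 G1 p2 G2 eqP12.
have key f E' : f \in pffun_on y0 B R -> Gprop (A :\: B) B E' ->
    E' = [set p in Phi B f E' | (p.1 \in A) && (p.2 \in A :\: B)].
  move=> pf G; apply/setP => [[x y]]; rewrite inE /=; apply/idP/idP => [h|].
    have:= g1b G h; rewrite ABA => ->.
    by rewrite (g1a G h) ?andbT; apply/inPhi; constructor 1.
  case/andP => /inPhi[//|[yB _]|[b bB [_ ->]]] /andP[xA].
    by rewrite inE yB.
  by case: (nAR xA (pff_in pf bB)).
have eE : E1 = E2 by rewrite (key _ _ p1 G1) (key _ _ p2 G2) eqP12.
split=> //; apply/ffunP => x.
case: (boolP (x \in B)) => xB; last by rewrite (pff_out p1 xB) (pff_out p2 xB).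
have : (f1 x, x) \in Phi B f2 E2 by rewrite -eqP12; apply/inPhi; constructor 2.
case/inPhi => [/(g1a G2)|[]//|[b _ [/(g1a G2)]]]; by rewrite inE xB.
Qed.

Lemma Phi_surj E : Gprop A R E -> rootsE A R E = B ->
  exists f E', [/\ f \in pffun_on y0 B R, Gprop (A :\: B) B E' & Phi B f E' = E].
Proof.
move=> G rB.
pose f := [ffun b => if b \in B then odflt y0 [pick r | (r,b) \in E] else y0].
pose E' := [set p in E | (p.1 \in A) && (p.2 \in A :\: B)].
have rootB b : b \in B -> b \in A /\ forall a, (a,b) \in E -> a \in R.
  by rewrite -rB => /rootsP.
have fE b : b \in B -> (f b, b) \in E /\ f b \in R.
  move=> bB; rewrite /f ffunE bB; case: pickP => [r /= rb|none].
    by split=> //; case: (rootB b bB) => _; apply.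
  have [r _ rb] := g5 G (proj1 (rootB b bB)).
  by rewrite none in rb.
have fB b x : b \in B -> (x,b) \in E -> x = f b.
  move=> bB xb; have [fb fR] := fE b bB.
  have xR := (proj2 (rootB b bB)) _ xb.
  apply/eqP; apply: contraT => nx.
  by case/orP: (g4 G xb fb nx) => /(g1a G) h; [case: (nAR h fR)|case: (nAR h xR)].
have pf : f \in pffun_on y0 B R.
  apply: pff_intro => x xB; first by rewrite /f ffunE (negbTE xB).
  by case: (fE x xB).
have notroot x y : (x,y) \in E -> x \in A -> y \notin B.
  by move=> xy xA; apply/negP => /rootB[_ /(_ x xy) /(nAR xA)].
have inE' x y : ((x,y) \in E') = [&& (x,y) \in E, x \in A & y \in A :\: B].
  by rewrite inE.
have belowB y : y \in A :\: B -> exists2 b, b \in B & (b,y) \in E.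
  rewrite inE => /andP[yB yA]; have [b br /orP[/eqP eb|by_]] := root_below G yA.
    by rewrite -eb -rB br in yB.
  by exists b; rewrite // -rB.
have G' : Gprop (A :\: B) B E'.
  constructor.
  - by move=> x y; rewrite inE' => /and3P[].
  - by move=> x y; rewrite inE' ABA => /and3P[].
  - by move=> x; rewrite inE' (negbTE (g2 G x)).
  - move=> x y z; rewrite !inE' => /and3P[xy xA _] /and3P[yz _ zA].
    by rewrite (g3 G xy yz) xA zA.
  - move=> x y z; rewrite !inE' => /and3P[xz xA _] /and3P[yz yA _] nxy.
    case/orP: (g4 G xz yz nxy) => h; apply/orP; [left|right]; rewrite h /=.
      by rewrite xA inE (notroot _ _ h xA) (g1a G h).
    by rewrite yA inE (notroot _ _ h yA) (g1a G h).
  - move=> z zA'; have [b bB bz] := belowB z zA'.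
    by exists b; rewrite // inE' bz zA' (proj1 (rootB b bB)).
exists f, E'; split=> //.
apply/setP => [[x y]]; apply/idP/idP => [/inPhi|xy]; last apply/inPhi.
  case=> [|[yB ->]|[b bB [bx ->]]]; first by rewrite inE' => /and3P[].
    by case: (fE y yB).
  by move: bx; rewrite inE' => /and3P[bx _ _]; exact (g3 G (proj1 (fE b bB)) bx).
case: (boolP (y \in B)) => yB; first by constructor 2; split=> //; exact: fB.
have yA' : y \in A :\: B by rewrite inE yB (g1a G xy).
have := g1b G xy; rewrite inE => /orP[xA|xR].
  by constructor 1; rewrite inE' xy xA yA'.
have [b bB bz] := belowB y yA'.
have bA := proj1 (rootB b bB).
have nxb : x != b by apply/negP => /eqP eb; rewrite eb in xR; apply: (nAR bA xR).
case/orP: (g4 G xy bz nxb) => [xb|/(g1a G) xA]; last by case: (nAR xA xR).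
constructor 3; exists b => //; split; first by rewrite inE' bz bA yA'.
exact: fB.
Qed.

Lemma decomp_card :
  #|[set E in Gset A R | rootsE A R E == B]| = #|R| ^ #|B| * #|Gset (A :\: B) B|.
Proof.
rewrite -(card_pffun_on y0 B R) -(cardsE (pffun_on y0 B R)) -cardsX.
have -> : [set E in Gset A R | rootsE A R E == B] =
    [set Phi B x.1 x.2 | x in setX [set f in pffun_on y0 B R] (Gset (A :\: B) B)].
  apply/setP => E; rewrite inE; apply/andP/imsetP.
    case=> /inGset GE /eqP rE; have [f [E' [pf G' <-]]] := Phi_surj GE rE.
    by exists (f, E') => //; rewrite inE /= inE pf; apply/inGset.
  case=> [[f E']]; rewrite inE /= inE => /andP[pf /inGset G'] ->.
  have [GP rP] := Phi_G pf G'.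
  by split; [apply/inGset|apply/eqP].
rewrite card_in_imset // => [[f1 E1] [f2 E2]]; rewrite !inE /=.
move=> /andP[p1 /GP G1] /andP[p2 /GP G2] /= e.
by case: (Phi_inj p1 G1 p2 G2 e) => -> ->.
Qed.

End Decomp.


Lemma group_by_card A (g : nat -> nat) :
  \sum_(B in powerset A) g #|B| = \sum_(k < #|A|.+1) 'C(#|A|, k) * g k.
Proof.
transitivity (\sum_(B in powerset A) \sum_(k < #|A|.+1) (if #|B| == k then g k else 0)).
  apply: eq_bigr => B; rewrite inE => BA.
  have lt : #|B| < #|A|.+1 by rewrite ltnS subset_leq_card.
  rewrite -big_mkcond /= (big_pred1 (Ordinal lt)) // => k; by rewrite eq_sym.
rewrite exchange_big /=; apply: eq_bigr => k _.
rewrite -big_mkcondr /= -cards_draws.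
rewrite (eq_bigl (fun B => B \in [set B : {set T} | B \subset A & #|B| == k])).
  by rewrite sum_nat_const mulnC.
by move=> B; rewrite !inE.
Qed.


Theorem countG m : forall A R, #|A| = m -> [disjoint A & R] ->
  #|Gset A R| = hcount m #|R|.
Proof.
elim/ltn_ind: m => m IH A R cA dAR.
case: m IH cA => [|m] IH cA.
  have A0 : A = set0 by apply: cards0_eq.
  rewrite /= (_ : Gset A R = [set set0]) ?cards1 //.
  apply/setP => E; rewrite inE; apply/idP/idP.
    move/inGset => G; apply/eqP/setP => [[x y]]; rewrite inE.
    by apply/negP => /(g1a G); rewrite A0 inE.
  move=> /eqP ->; apply/inGset; constructor.
  - by move=> x y; rewrite inE.
  - by move=> x y; rewrite inE.
  - by move=> x; rewrite inE.
  - by move=> x y z; rewrite inE.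
  - by move=> x y z; rewrite inE.
  - by move=> z; rewrite A0 inE.
have -> : #|Gset A R| = \sum_(B in powerset A) #|[set E in Gset A R | rootsE A R E == B]|.
  rewrite -sum1_card (partition_big (rootsE A R) (mem (powerset A))) /=.
    apply: eq_bigr => B _; rewrite -sum1_card; apply: eq_bigl => E; by rewrite inE.
  by move=> E _; rewrite inE; apply/subsetP => b /rootsP[].
pose g k := if (k : nat) == 0 then 0 else #|R| ^ k * hcount (m.+1 - k) k.
rewrite (eq_bigr (fun B => g #|B|)); last first.
  move=> B; rewrite inE => BA; rewrite /g.
  case: (eqVneq #|B| 0) => [/cards0_eq B0|nB].
    apply/eqP; rewrite cards_eq0; apply/eqP/setP => E; rewrite !inE.
    apply/negP => /andP[/GP G /eqP rE].
    have [z zA] : exists z, z \in A.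
      by apply/set0Pn; rewrite -card_gt0 cA.
    by have [b] := root_below G zA; rewrite rE B0 inE.
  have [y0 _] : exists y0, y0 \in B by apply/set0Pn; rewrite -card_gt0 lt0n.
  rewrite (decomp_card y0 dAR BA).
  have cD : #|A :\: B| = m.+1 - #|B| by rewrite cardsD (setIidPr BA) cA.
  rewrite (IH (m.+1 - #|B|)) //.
    by rewrite -{2}(subn0 m.+1) ltn_sub2l // lt0n.
  rewrite -setI_eq0; apply/eqP/setP => x; rewrite !inE.
  by case: (x \in B); rewrite ?andbF.
by rewrite group_by_card cA hcount_rec.
Qed.
End Count.


Lemma sort_perm n (r : 'I_n -> nat) :
  exists s : 'S_n, forall x y, r y < r x -> s x < s y.
Proof.
pose bef (z x : 'I_n) := (r x < r z) || ((r z == r x) && (z < x)).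
have bef_trans z y x : bef z y -> bef y x -> bef z x.
  rewrite /bef => /orP[h1|/andP[/eqP h1 h2]] /orP[h3|/andP[/eqP h3 h4]];
  apply/orP; lia.
have bef_irr x : ~~ bef x x by rewrite /bef ltnn eqxx ltnn.
have bef_tot x y : x != y -> bef x y || bef y x.
  move=> nxy; rewrite /bef; have : (x : nat) <> y by move=> e; move/eqP: nxy; apply; apply: val_inj.
  move=> nxy'; lia.
pose S x := [set z | bef z x].
have Slt x : #|S x| < n.
  rewrite -[X in _ < X]card_ord; apply: proper_card; apply/properP; split; first by apply/subsetP.
  by exists x; rewrite ?inE // bef_irr.
have Smono x y : bef x y -> #|S x| < #|S y|.
  move=> bxy; apply: proper_card; apply/properP; split.
    by apply/subsetP => z; rewrite !inE => h; exact: bef_trans h bxy.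
  by exists x; rewrite !inE // bef_irr.
pose f x := Ordinal (Slt x).
have finj : injective f.
  move=> x y /(congr1 val) /= e; apply/eqP; apply: contraT => nxy.
  by case/orP: (bef_tot x y nxy) => /Smono; rewrite e ltnn.
exists (perm finj) => x y ryx; rewrite !permE /=.
by apply: Smono; rewrite /bef ryx.
Qed.


Import Order.TTheory GRing.Theory Num.Theory.
Local Open Scope ring_scope.
Notation Rl := Rdefinitions.R.


Lemma F2_cases (x : 'F_2) : x = 0 \/ x = 1.
Proof. by case: x => [[|[|m]] Hm] //; [left|right]; apply: val_inj. Qed.

Lemma F2_eq (x y : 'F_2) : (x == 1) = (y == 1) -> x = y.
Proof. by case: (F2_cases x) => ->; case: (F2_cases y) => ->. Qed.

Lemma F2_add1 (x y : 'F_2) : (x + y == 1) = (x == 1) (+) (y == 1).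
Proof. by case: (F2_cases x) => ->; case: (F2_cases y) => ->. Qed.

Lemma F2_neq1 (x : 'F_2) : (x != 1) = (x == 0).
Proof. by case: (F2_cases x) => ->. Qed.

Lemma F2_nat (k : nat) : (k%:R : 'F_2) = (odd k)%:R.
Proof.
elim: k => // k IH; rewrite -[k.+1]addn1 natrD IH addn1 /=.
by case: (odd k) => /=; apply: val_inj.
Qed.


Section FC.
Variable n : nat.
Implicit Types M : 'M['F_2]_n.

Definition anc M (a b : 'I_n) := (a != b) && (M b a == 1).

Definition FCpred M := [&& [forall i, M i i == 1],
   [forall a, forall b, forall c, anc M a b ==> anc M b c ==> anc M a c],
   [forall a, forall b, anc M a b ==> ~~ anc M b a] &
   [forall a, forall b, forall c, anc M a c ==> anc M b c ==> (a != b) ==>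
       anc M a b || anc M b a]].

Record FCprop M : Prop := FCProp {
  fc1 : forall i, M i i = 1;
  fc2 : forall a b c, anc M a b -> anc M b c -> anc M a c;
  fc3 : forall a b, anc M a b -> ~~ anc M b a;
  fc4 : forall a b c, anc M a c -> anc M b c -> a != b -> anc M a b || anc M b a }.

Lemma FCP M : reflect (FCprop M) (FCpred M).
Proof.
apply: (iffP and4P) => [[/forallP h1 /forallP h2 /forallP h3 /forallP h4]|[h1 h2 h3 h4]].
  constructor.
  - by move=> i; apply/eqP.
  - move=> a b c H1 H2; move/forallP: (h2 a) => /(_ b) /forallP /(_ c).
    by rewrite H1 H2.
  - by move=> a b H1; move/forallP: (h3 a) => /(_ b); rewrite H1.
  - move=> a b c H1 H2 H3; move/forallP: (h4 a) => /(_ b) /forallP /(_ c).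
    by rewrite H1 H2 H3.
split.
- by apply/forallP => i; rewrite h1.
- apply/forallP=> a; apply/forallP=> b; apply/forallP=> c.
  apply/implyP=> H1; apply/implyP=> H2; exact: h2 H1 H2.
- by apply/forallP=> a; apply/forallP=> b; apply/implyP=> H1; exact: h3 H1.
- apply/forallP=> a; apply/forallP=> b; apply/forallP=> c.
  apply/implyP=> H1; apply/implyP=> H2; apply/implyP=> H3; exact: h4 H1 H2 H3.
Qed.

Definition FCset := [set M | FCpred M].

Definition psi M : {set option 'I_n * option 'I_n} :=
  [set p | match p with (None, Some _) => true | (Some a, Some b) => anc M a b | _ => false end].

Definition AA := [set x : option 'I_n | x != None].
Definition RR := [set (None : option 'I_n)].

Lemma psi_G M : FCprop M -> Gprop AA RR (psi M).
Proof.
move=> F; constructor.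
- by move=> [a|] [b|]; rewrite !inE.
- by move=> [a|] [b|]; rewrite !inE.
- by move=> [a|]; rewrite !inE /anc ?eqxx.
- move=> [a|] [b|] [c|]; rewrite !inE //; exact: fc2.
- move=> [a|] [b|] [c|]; rewrite !inE // => H1 H2 H3; exact: fc4 H1 H2 H3.
- by move=> [c|]; rewrite !inE // => _; exists None; rewrite !inE.
Qed.

Lemma psi_inj : {in FCset &, injective psi}.
Proof.
move=> M1 M2; rewrite !inE => /FCP F1 /FCP F2 e.
apply/matrixP => b a; case: (eqVneq a b) => [->|nab]; first by rewrite !fc1.
have : (Some a, Some b) \in psi M1 = ((Some a, Some b) \in psi M2) by rewrite e.
by rewrite !inE /anc nab /=; apply: F2_eq.
Qed.

Lemma psi_surj E : Gprop AA RR E -> exists2 M, M \in FCset & E = psi M.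
Proof.
move=> G.
pose M := \matrix_(b, a) (if a == b then 1 else if (Some a, Some b) \in E then 1 else 0 : 'F_2).
have ancE a b : anc M a b = ((Some a, Some b) \in E).
  rewrite /anc mxE eq_sym; case: (eqVneq a b) => [->|nab] /=.
    by rewrite (negbTE (g2 G _)).
  by case: ((Some a, Some b) \in E).
exists M.
  rewrite inE; apply/FCP; constructor.
  - by move=> i; rewrite mxE eqxx.
  - by move=> a b c; rewrite !ancE; exact: (g3 G).
  - move=> a b; rewrite !ancE => H1; apply/negP => H2.
    by have := g3 G H1 H2; rewrite (negbTE (g2 G _)).
  - move=> a b c; rewrite !ancE => H1 H2 H3; apply: (g4 G H1 H2).
    by apply: contra H3 => /eqP [->].
apply/setP => [[[a|] [b|]]]; rewrite !inE ?ancE //;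
  try by apply/negP => /(g1a G); rewrite inE.
have bA : Some b \in AA by rewrite inE.
by have [r] := g5 G bA; rewrite inE => /eqP ->.
Qed.

Lemma card_FC : #|FCset| = (n.+1 ^ n.-1)%N.
Proof.
rewrite -(card_in_imset psi_inj).
have -> : [set psi M | M in FCset] = Gset AA RR.
  apply/setP => E; apply/imsetP/idP => [[M]|/inGset G].
    by rewrite inE => /FCP F ->; apply/inGset; apply: psi_G.
  by have [M MF ->] := psi_surj G; exists M.
rewrite (countG (m := n)).
- by rewrite cards1; case: n => //= m; rewrite mul1n addn1.
- rewrite (_ : AA = ~: [set None]) ?cardsC1 ?card_option ?card_ord //.
  by apply/setP => x; rewrite !inE.
- rewrite -setI_eq0; apply/eqP/setP => x; rewrite !inE.
  by case: x.
Qed.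

End FC.


Lemma det_rank (R : idomainType) k (X : 'M[R]_k) (rho : 'I_k -> nat) :
  (forall a b, a != b -> X a b != 0 -> (rho b < rho a)%N) ->
  \det X = \prod_a X a a.
Proof.
move=> hr; rewrite /determinant (bigD1 1%g) //= [X in _ + X]big1 ?addr0.
  by rewrite odd_perm1 expr0 mul1r; apply: eq_bigr => i _; rewrite perm1.
move=> s ns; apply/eqP; rewrite mulf_eq0; apply/orP; right.
rewrite prodf_seq_eq0; apply: contraT; rewrite -all_predC => /allP /= hall.
have nz i : X i (s i) != 0 by apply: hall; rewrite mem_index_enum.
have le i : (rho (s i) <= rho i)%N.
  case: (eqVneq i (s i)) => [<-//|ne]; exact: ltnW (hr _ _ ne (nz i)).
have [i0 hi0] : exists i, s i != i.
  apply/existsP; apply: contraT; rewrite negb_exists => /forallP h.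
  have e : s = 1%g by apply/permP => i; rewrite perm1; move: (h i); rewrite negbK => /eqP.
  by rewrite e eqxx in ns.
have lt : (rho (s i0) < rho i0)%N by apply: hr; rewrite // eq_sym.
have : (\sum_i rho (s i) < \sum_i rho i)%N.
  rewrite (bigD1 i0) //= [X in (_ < X)%N](bigD1 i0) //=.
  by rewrite -addSn leq_add // leq_sum // => i _; apply: le.
by rewrite [X in (_ < X)%N](reindex_inj (@perm_inj _ s)) /= ltnn.
Qed.


Lemma chain_sum_gen (R : nmodType) (T : finType) (V : {set T}) (c : T -> nat) (F : nat -> R) :
  {in V &, injective c} -> (forall j, j \in V -> (c j < #|V|)%N) ->
  \sum_(j in V) F (c j) = \sum_(k < #|V|) F k.
Proof.
move=> ci cl.
case eN: #|V| => [|N].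
  by rewrite big_ord0; apply: big_pred0 => j; apply/negP => jV; have := cl j jV; rewrite eN.
pose cc j : 'I_N.+1 := inord (c j).
have ccE j : j \in V -> (cc j : nat) = c j by move=> jV; rewrite inordK // -eN cl.
have cci : {in V &, injective cc}.
  move=> j j' jV j'V e; apply: ci => //.
  by rewrite -(ccE j) // -(ccE j') // e.
have Iall : [set cc j | j in V] = [set: 'I_N.+1].
  by apply/eqP; rewrite eqEcard subsetT cardsT card_ord card_in_imset // ?eN /=.
transitivity (\sum_(j in V) F (cc j)).
  by apply: eq_bigr => j jV; rewrite ccE.
rewrite -(big_imset (fun k : 'I_N.+1 => F k) cci) /= Iall.
by apply: eq_bigl => k; rewrite inE.
Qed.

Lemma alt_sum (R : comNzRingType) m : (-1) ^+ m + 2%:R * \sum_(k < m) (-1) ^+ k = 1 :> R.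
Proof.
elim: m => [|m IH]; first by rewrite big_ord0 mulr0 addr0.
rewrite big_ord_recr /= exprS -[RHS]IH.
set a := (-1) ^+ m; set S := \sum_(i < m) _; ring.
Qed.



Section Construct.
Variables (n : nat) (M : 'M['F_2]_n) (s : vertex n).
Hypothesis FM : FCprop M.

Definition rk (x : 'I_n) := #|[set a | anc M a x]|.

Lemma anc_irr a : anc M a a = false.
Proof. by rewrite /anc eqxx. Qed.

Lemma rk_lt a b : anc M a b -> (rk a < rk b)%N.
Proof.
move=> ab; apply: proper_card; apply/properP; split.
  by apply/subsetP => c; rewrite !inE => ca; exact (fc2 FM ca ab).
by exists a; rewrite !inE ?anc_irr.
Qed.

Definition tb i := ((M *m s) i 0 == 1).
Definition t i : Rl := (-1) ^+ tb i.
Definition M0 (i j : 'I_n) : Rl := if i == j then 1 else if anc M j i then 2%:R else 0.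
Definition Mr : 'M[Rl]_n := \matrix_(i, j) (t i * t j * M0 i j).
Definition qr : 'cV[Rl]_n := \col_i t i.

Lemma tt1 i : t i * t i = 1.
Proof. by rewrite /t -expr2 sqrr_sign. Qed.

Lemma t_neq0 i : t i != 0.
Proof. by rewrite /t signr_eq0. Qed.

Lemma Mr_nz a b : a != b -> Mr a b != 0 -> anc M b a.
Proof.
move=> nab; rewrite mxE /M0 (negbTE nab).
by case: (anc M b a) => //; rewrite mulr0 eqxx.
Qed.

Lemma Mr_diag a : Mr a a = 1.
Proof. by rewrite mxE /M0 eqxx mulr1 tt1. Qed.

Lemma Mr_P : P_matrix Mr.
Proof.
move=> S; rewrite /principal_minor.
set f := @enum_val _ (mem S).
rewrite (@det_rank _ _ _ (fun a => rk (f a))).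
  by rewrite big1 ?ltr01 // => a _; rewrite mxE Mr_diag.
move=> a b nab; rewrite mxE => h; apply: rk_lt; apply: Mr_nz h.
by apply: contra nab => /eqP /enum_val_inj ->.
Qed.

Definition vb (v : vertex n) j := (v j 0 == 1).
Definition Vanc (v : vertex n) i := [set a | vb v a && anc M a i].
Definition cc (v : vertex n) i := #|Vanc v i|.
Definition xsol (v : vertex n) : 'cV[Rl]_n :=
  \col_j (-1) ^+ (vb v j (+) tb j (+) odd (cc v j)).

Lemma basis_unit v : basis_mx Mr v \in unitmx.
Proof.
rewrite unitmxE (@det_rank _ _ _ rk).
  rewrite unitfE; apply/prodf_neq0 => a _; rewrite mxE.
  case: (v a 0 == 1); rewrite ?Mr_diag ?oppr_eq0 ?eqxx ?oner_eq0 //.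
move=> a b nab; rewrite mxE; case: (v b 0 == 1).
  by rewrite oppr_eq0 => h; apply: rk_lt; apply: Mr_nz h.
by rewrite (negbTE nab) eqxx.
Qed.

Lemma cc_lt v j k : vb v j -> anc M j k -> (cc v j < cc v k)%N.
Proof.
move=> vj jk; apply: proper_card; apply/properP; split.
  by apply/subsetP => c; rewrite !inE => /andP[-> cj] /=; exact (fc2 FM cj jk).
by exists j; rewrite !inE ?anc_irr ?andbF // vj jk.
Qed.

Lemma cc_inj v i : {in Vanc v i &, injective (cc v)}.
Proof.
move=> j j'; rewrite !inE => /andP[vj ji] /andP[vj' j'i] e.
apply/eqP; apply: contraT => nj.
case/orP: (fc4 FM ji j'i nj) => h.
  by have := cc_lt vj h; rewrite e ltnn.
by have := cc_lt vj' h; rewrite e ltnn.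
Qed.

Lemma Wsum v i : \sum_(j in Vanc v i) (-1) ^+ cc v j = \sum_(k < cc v i) (-1) ^+ k :> Rl.
Proof.
apply: (chain_sum_gen (fun k => (-1) ^+ k : Rl) (cc_inj (v:=v) (i:=i))).
by move=> j; rewrite inE => /andP[vj ji]; apply: cc_lt.
Qed.

Lemma term_diag (R : comNzRingType) (bv bt : bool) (c : R) :
  (if bv then - ((-1) ^+ bt * (-1) ^+ bt * 1) else true%:R) * ((-1) ^+ bv * (-1) ^+ bt * c)
  = (-1) ^+ bt * c.
Proof. by case: bv; case: bt => /=; ring. Qed.

Lemma term_off (R : comNzRingType) (bv bti btj ba : bool) (c : R) :
  (if bv then - ((-1) ^+ bti * (-1) ^+ btj * (if ba then 2%:R else 0)) else false%:R) *
  ((-1) ^+ bv * (-1) ^+ btj * c) = (-1) ^+ bti * (if bv && ba then 2%:R * c else 0).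
Proof. by case: bv; case: bti; case: btj; case: ba => /=; ring. Qed.

Lemma term v i j : basis_mx Mr v i j * xsol v j 0 =
  t i * (if j == i then (-1) ^+ cc v i
         else if vb v j && anc M j i then 2%:R * (-1) ^+ cc v j else 0).
Proof.
rewrite !mxE /vb !signr_addb signr_odd /M0 /t.
case: (eqVneq j i) => [->|nji]; rewrite ?eqxx.
  exact: term_diag.
exact: term_off.
Qed.

Lemma Bx v : basis_mx Mr v *m xsol v = qr.
Proof.
apply/matrixP => i k; rewrite (ord1 k) !mxE.
rewrite (eq_bigr _ (fun j _ => term v i j)) -big_distrr (bigD1 i) //= eqxx.
transitivity (t i * ((-1) ^+ cc v i + 2%:R * \sum_(j in Vanc v i) (-1) ^+ cc v j));
  last by rewrite (Wsum v i) (alt_sum _ (cc v i)) mulr1.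
rewrite mulr_sumr; congr (t i * (_ + _)).
rewrite big_mkcond [RHS]big_mkcond; apply: eq_bigr => j _.
rewrite inE; case: (eqVneq j i) => [->|nji]; first by rewrite anc_irr andbF ?eqxx.
by rewrite ?(negbTE nji); case: (vb v j && anc M j i).
Qed.

Lemma solE v : basic_sol Mr qr v = xsol v.
Proof. by rewrite /basic_sol -(Bx v) mulKmx // basis_unit. Qed.

Lemma Mr_nondeg : Defs.nondegenerate Mr qr.
Proof.
move=> v; split; first exact: basis_unit.
by move=> i; rewrite solE mxE signr_eq0.
Qed.

Lemma Mv_entry (v : vertex n) i : ((M *m v) i 0 == 1) = vb v i (+) odd (cc v i).
Proof.
rewrite mxE (bigD1 i) //= fc1 // mul1r F2_add1.
congr (_ (+) _).
rewrite (eq_bigr (fun j => if j \in Vanc v i then 1 else 0)); last first.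
  move=> j nji; rewrite inE /anc /vb (negbTE nji).
  by case: (F2_cases (M i j)) => ->; case: (F2_cases (v j 0)) => -> //=; rewrite ?mul0r ?mulr0 ?mulr1.
rewrite -big_mkcondr /=.
rewrite (eq_bigl (fun j => j \in Vanc v i)); last first.
  move=> j; rewrite inE; case: (eqVneq j i) => [->|nji] /=; first by rewrite anc_irr andbF.
  by [].
by rewrite sumr_const F2_nat; case: (odd (cc v i)).
Qed.

Lemma addE (A B : 'M['F_2]_(n,1)) i j : (A + B) i j = A i j + B i j.
Proof. by rewrite mxE. Qed.

Lemma SW_eq : stickney_watson Mr qr = [ffun v => M *m (v + s)].
Proof.
apply/ffunP => v; rewrite !ffunE solE; apply/matrixP => i k.
rewrite (ord1 k) [LHS]mxE /xsol [in LHS]mxE signr_lt0.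
apply: F2_eq; rewrite mulmxDr addE F2_add1 (Mv_entry v i) -/(tb i).
by case: (vb v i); case: (tb i); case: (odd (cc v i)).
Qed.

Lemma construct_realizable : realizable [ffun v => M *m (v + s)].
Proof. by exists Mr, qr; split; [exact: Mr_P|exact: Mr_nondeg|rewrite SW_eq]. Qed.

Lemma construct_matousek : matousek_type [ffun v => M *m (v + s)].
Proof.
have [sg Hsg] := sort_perm rk.
pose A := \matrix_(a, b) M ((sg^-1)%g a) ((sg^-1)%g b).
have upA : upper_triangular A.
  move=> a b ba; rewrite mxE; apply/eqP; rewrite -F2_neq1; apply/negP => Mxy.
  have nxy : (sg^-1)%g b != (sg^-1)%g a.
    by apply: contraTneq ba => /perm_inj ->; rewrite ltnn.
  have := Hsg _ _ (rk_lt (_ : anc M ((sg^-1)%g b) ((sg^-1)%g a))).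
  rewrite !permKV => /(_ _) h.
  have : (a < b)%N by apply: h; rewrite /anc nxy Mxy.
  by rewrite ltnNge (ltnW ba).
exists sg, A, s; split => //.
  rewrite unitmxE (@det_rank _ _ _ (fun a => n - a)%N).
    by rewrite big1 ?unitr1 // => a _; rewrite mxE fc1.
  move=> a b nab Aab.
  have : ~~ (b < a)%N by apply: contra Aab => h; rewrite upA.
  have nab' : (a : nat) != b := nab.
  have := ltn_ord b; lia.
move=> v; rewrite ffunE; congr (_ *m _).
apply/matrixP => x y.
by rewrite tr_perm_mx -row_permE -col_permE !mxE !permK.
Qed.

End Construct.


Lemma det2 (R : comNzRingType) (A : 'M[R]_2) : \det A = A 0 0 * A 1 1 - A 0 1 * A 1 0.
Proof.
rewrite (expand_det_row _ 0) !big_ord_recl big_ord0 /cofactor !det_mx11 !mxE /=.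
rewrite addr0 expr0 expr1 mul1r mulN1r mulrN.
by congr (_ * _ - _ * _); congr (A _ _); apply: val_inj.
Qed.

Section S.
Variables (R : realFieldType) (n : nat) (Mr : 'M[R]_n).
Lemma minor1 i : 0 < \det (mxsub (@enum_val _ (mem [set i])) (@enum_val _ (mem [set i])) Mr) -> 0 < Mr i i.
Proof.
have fP := @enum_valP _ (mem [set i]).
move: fP; set f := @enum_val _ (mem [set i]).
move: f; set k := #|_|.
have ek : k = 1%N by rewrite /k cards1.
clearbody k; subst k => f fP.
rewrite det_mx11 mxE.
by have := fP 0; rewrite inE => /eqP ->.
Qed.

Lemma minor2 i j : i != j ->
  0 < \det (mxsub (@enum_val _ (mem [set i; j])) (@enum_val _ (mem [set i; j])) Mr) ->
  0 < Mr i i * Mr j j - Mr i j * Mr j i.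
Proof.
move=> nij.
have fP := @enum_valP _ (mem [set i; j]).
have fI := @enum_val_inj _ (mem [set i; j]).
move: fP fI; set f := @enum_val _ (mem [set i; j]).
move: f; set k := #|_|.
have ek : k = 2%N by rewrite /k cards2 nij.
clearbody k; subst k => f fP fI.
rewrite det2 !mxE.
have n01 : f 0 != f 1 by apply/eqP => /fI.
have := fP 0; have := fP 1; rewrite !inE.
case/orP => /eqP e1; case/orP => /eqP e0; rewrite e0 e1 in n01 *; rewrite ?eqxx // in n01.
all: move=> h; by [|rewrite (mulrC (Mr i i)) (mulrC (Mr i j))].
Qed.
End S.


Lemma decomp (R : realDomainType) (y : R) b : y != 0 -> (y < 0) = b ->
  exists2 p, 0 < p & y = (-1) ^+ b * p.
Proof.
move=> y0 yb; exists `|y|; first by rewrite normr_gt0.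
by rewrite -yb -numEsign.
Qed.

Lemma core (R : realFieldType) (q1 q2 q3 N11 N12 N21 N22 N31 N32 X1 X2 X3 Y1 Y2 Y3 Z1 Z2 Z3 : R)
  (c1 c2 c3 m21 m31 : bool) :
  q1 = - (N12 * X2) + X1 -> q2 = - (N22 * X2) -> q3 = - (N32 * X2) + X3 ->
  q1 = - (N11 * Y1) -> q2 = - (N21 * Y1) + Y2 -> q3 = - (N31 * Y1) + Y3 ->
  q1 = - (N11 * Z1) - N12 * Z2 -> q2 = - (N21 * Z1) - N22 * Z2 ->
  q3 = - (N31 * Z1) - N32 * Z2 + Z3 ->
  0 < N11 -> 0 < N22 -> 0 < N11 * N22 - N12 * N21 ->
  q1 != 0 -> q2 != 0 -> q3 != 0 -> X1 != 0 -> Y2 != 0 -> Y3 != 0 -> X3 != 0 -> Z3 != 0 ->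
  (q1 < 0) = c1 -> (q2 < 0) = c2 -> (q3 < 0) = c3 ->
  (X1 < 0) = c1 -> (Y2 < 0) = m21 (+) c2 -> (Y3 < 0) = m31 (+) c3 -> (X3 < 0) = ~~ c3 ->
  (Z3 < 0) = m31 (+) true (+) c3 -> m21 (+) m31 -> False.
Proof.
move=> ex1 ex2 ex3 ey1 ey2 ey3 ez1 ez2 ez3 p11 p22 pdet.
move=> nq1 nq2 nq3 nX1 nY2 nY3 nX3 nZ3 sq1 sq2 sq3 sX1 sY2 sY3 sX3 sZ3 hm.
set det := N11 * N22 - N12 * N21 in pdet.
have eA : N22 * X1 = N22 * q1 - N12 * q2 by rewrite ex1 ex2; ring.
have eB : N11 * Y2 = N11 * q2 - N21 * q1 by rewrite ey1 ey2; ring.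
have eD : N11 * Y3 = N11 * q3 - N31 * q1 by rewrite ey1 ey3; ring.
have eE : N22 * X3 = N22 * q3 - N32 * q2 by rewrite ex2 ex3; ring.
have eF : det * Z3 = q1 * (N21 * N32 - N22 * N31) - q2 * (N11 * N32 - N12 * N31) + q3 * det.
  by rewrite /det ez1 ez2 ez3; ring.
have key : q1 * q2 * (det * Z3) = - (q3 * (N11 * Y2) * (N22 * X1)) +
    q2 * (N11 * Y3) * (N22 * X1) + q1 * (N22 * X3) * (N11 * Y2).
  by rewrite eA eB eD eE eF /det; ring.
move: key; clear ex1 ex2 ex3 ey1 ey2 ey3 ez1 ez2 ez3 eA eB eD eE eF.
have [a1 pa1 ->] := decomp nq1 sq1.
have [a2 pa2 ->] := decomp nq2 sq2.
have [a3 pa3 ->] := decomp nq3 sq3.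
have [b1 pb1 ->] := decomp nX1 sX1.
have [b2 pb2 ->] := decomp nY2 sY2.
have [b3 pb3 ->] := decomp nY3 sY3.
have [b4 pb4 ->] := decomp nX3 sX3.
have [b5 pb5 ->] := decomp nZ3 sZ3.
have PL : 0 < a1 * a2 * (det * b5) by rewrite !mulr_gt0.
have P1 : 0 < a3 * (N11 * b2) * (N22 * b1) by rewrite !mulr_gt0.
have P2 : 0 < a2 * (N11 * b3) * (N22 * b1) by rewrite !mulr_gt0.
have P3 : 0 < a1 * (N22 * b4) * (N11 * b2) by rewrite !mulr_gt0.
have em : m21 = ~~ m31 by move: hm; case: (m21); case: (m31).
rewrite em; clear em.
move: PL P1 P2 P3; clear sq1 sq2 sq3 sX1 sY2 sY3 sX3 sZ3 hm.
case: c1; case: c2; case: c3; case: m31 => /= PL P1 P2 P3; rewrite ?expr1 ?expr0 => key.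
all: lra.
Qed.



Lemma sum_set2 (R : nmodType) n (f : 'I_n -> R) i j : i != j ->
  \sum_(l in [set i; j]) f l = f i + f j.
Proof. by move=> nij; rewrite big_setU1 ?big_set1 // inE. Qed.

Section Nec.
Variables (n : nat) (Mr : 'M[Rl]_n) (q : 'cV[Rl]_n) (Mp : 'M['F_2]_n) (s : vertex n).
Hypotheses (PM : P_matrix Mr) (ND : Defs.nondegenerate Mr q)
  (SW : forall v, stickney_watson Mr q v = Mp *m (v + s)).

Definition VX (X : {set 'I_n}) : vertex n := \col_l (if l \in X then 1 else 0).

Lemma VXb (X : {set 'I_n}) l : (VX X l 0 == 1) = (l \in X).
Proof. by rewrite mxE; case: (l \in X). Qed.

Lemma row_eq (X : {set 'I_n}) r : q r 0 = - (\sum_(l in X) Mr r l * basic_sol Mr q (VX X) l 0) +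
  (if r \in X then 0 else basic_sol Mr q (VX X) r 0).
Proof.
have e : basis_mx Mr (VX X) *m basic_sol Mr q (VX X) = q.
  by rewrite /basic_sol mulmxA mulmxV ?mul1mx //; case: (ND (VX X)).
move: e; set x := basic_sol Mr q (VX X); clearbody x => e.
rewrite -{1}e mxE (bigID (fun l => l \in X)) /=.
congr (_ + _).
  rewrite -sumrN; apply: eq_bigr => l lX; rewrite mxE VXb lX mulNr.
  by [].
case: (boolP (r \in X)) => rX.
  apply: big1 => l lX; rewrite mxE VXb (negbTE lX).
  have : r != l by apply: contraNneq lX => <-.
  by move/negbTE ->; rewrite mul0r.
rewrite (bigD1 r) //= big1 ?addr0.
  by rewrite mxE VXb (negbTE rX) eqxx mul1r.
move=> l /andP[lX nlr]; rewrite mxE VXb (negbTE lX).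
by rewrite eq_sym (negbTE nlr) mul0r.
Qed.

Lemma addE2 (A B : 'M['F_2]_(n,1)) i j : (A + B) i j = A i j + B i j.
Proof. by rewrite mxE. Qed.

Lemma sign_eq (X : {set 'I_n}) r : (basic_sol Mr q (VX X) r 0 < 0) =
  ((\sum_(l in X) Mp r l) + (Mp *m s) r 0 == 1).
Proof.
have h := SW (VX X); move: h; rewrite /stickney_watson ffunE.
set x := basic_sol Mr q (VX X); clearbody x.
move/(congr1 (fun A : 'cV['F_2]_n => A r 0)); rewrite [Y in Y = _ -> _]mxE mulmxDr addE2.
have -> : (Mp *m VX X) r 0 = \sum_(l in X) Mp r l.
  rewrite mxE [RHS]big_mkcond; apply: eq_bigr => l _; rewrite mxE.
  by case: (l \in X); rewrite ?mulr1 ?mulr0.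
by move<-; case: (x r 0 < 0).
Qed.

Lemma q_x0 r : q r 0 = basic_sol Mr q (VX set0) r 0.
Proof. by rewrite (row_eq set0 r) big_set0 oppr0 add0r inE. Qed.

Lemma forbidden i j k : i != j -> j != k -> i != k -> Mp i j = 0 -> Mp k j = 1 ->
  (Mp j i == 1) (+) (Mp k i == 1) -> False.
Proof.
move=> nij njk nik eij ekj hm.
have nji : j != i by rewrite eq_sym.
have nki : k != i by rewrite eq_sym.
have nkj : k != j by rewrite eq_sym.
have iI : i \in [set i] by rewrite inE.
have jJ : j \in [set j] by rewrite inE.
have iJ : i \notin [set j] by rewrite inE.
have jI : j \notin [set i] by rewrite inE.
have kI : k \notin [set i] by rewrite inE.
have kJ : k \notin [set j] by rewrite inE.
have iIJ : i \in [set i; j] by rewrite !inE eqxx.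
have jIJ : j \in [set i; j] by rewrite !inE eqxx orbT.
have kIJ : k \notin [set i; j] by rewrite !inE negb_or nki.
have nz X r : basic_sol Mr q (VX X) r 0 != 0 by case: (ND (VX X)) => _; apply.
have nq r : q r 0 != 0 by rewrite q_x0.
have sq r : (q r 0 < 0) = ((Mp *m s) r 0 == 1).
  by rewrite q_x0 sign_eq big_set0 add0r.
apply: (@core _ (q i 0) (q j 0) (q k 0) (Mr i i) (Mr i j) (Mr j i) (Mr j j) (Mr k i) (Mr k j)
  (basic_sol Mr q (VX [set j]) i 0) (basic_sol Mr q (VX [set j]) j 0) (basic_sol Mr q (VX [set j]) k 0)
  (basic_sol Mr q (VX [set i]) i 0) (basic_sol Mr q (VX [set i]) j 0) (basic_sol Mr q (VX [set i]) k 0)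
  (basic_sol Mr q (VX [set i; j]) i 0) (basic_sol Mr q (VX [set i; j]) j 0)
  (basic_sol Mr q (VX [set i; j]) k 0)
  ((Mp *m s) i 0 == 1) ((Mp *m s) j 0 == 1) ((Mp *m s) k 0 == 1) (Mp j i == 1) (Mp k i == 1)).
- by rewrite (row_eq [set j] i) big_set1 (negbTE iJ).
- by rewrite (row_eq [set j] j) big_set1 jJ addr0.
- by rewrite (row_eq [set j] k) big_set1 (negbTE kJ).
- by rewrite (row_eq [set i] i) big_set1 iI addr0.
- by rewrite (row_eq [set i] j) big_set1 (negbTE jI).
- by rewrite (row_eq [set i] k) big_set1 (negbTE kI).
- by rewrite (row_eq [set i; j] i) (sum_set2 _ nij) iIJ addr0 opprD.
- by rewrite (row_eq [set i; j] j) (sum_set2 _ nij) jIJ addr0 opprD.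
- by rewrite (row_eq [set i; j] k) (sum_set2 _ nij) (negbTE kIJ) opprD.
- exact: minor1 (PM [set i]).
- exact: minor1 (PM [set j]).
- exact: minor2 nij (PM [set i; j]).
- exact: nq.
- exact: nq.
- exact: nq.
- exact: nz.
- exact: nz.
- exact: nz.
- exact: nz.
- exact: nz.
- exact: sq.
- exact: sq.
- exact: sq.
- by rewrite sign_eq big_set1 eij add0r.
- by rewrite sign_eq big_set1 F2_add1.
- by rewrite sign_eq big_set1 F2_add1.
- by rewrite sign_eq big_set1 ekj F2_add1.
- by rewrite sign_eq (sum_set2 _ nij) ekj !F2_add1.
- exact: hm.
Qed.

End Nec.


Section Final.
Variable n : nat.

Lemma PAPt_entry (sg : 'S_n) (A : 'M['F_2]_n) x y :
  (perm_mx sg *m A *m (perm_mx sg)^T) x y = A (sg x) (sg y).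
Proof. by rewrite tr_perm_mx -row_permE -col_permE !mxE. Qed.

Lemma FC_unit (M : 'M['F_2]_n) : FCprop M -> M \in unitmx.
Proof.
move=> FM; rewrite unitmxE (@det_rank _ _ _ (rk M)).
  by rewrite big1 ?unitr1 // => a _; rewrite fc1.
move=> a b nab Mab; apply: (rk_lt FM).
by rewrite /anc eq_sym nab /=; move: Mab; case: (F2_cases (M a b)) => ->; rewrite ?eqxx.
Qed.

Lemma FC_of_matousek (sg : 'S_n) (A : 'M['F_2]_n) (s : vertex n) (Mr : 'M[Rdefinitions.R]_n) q :
  upper_triangular A -> A \in unitmx -> P_matrix Mr -> Defs.nondegenerate Mr q ->
  (forall v, stickney_watson Mr q v = (perm_mx sg *m A *m (perm_mx sg)^T) *m (v + s)) ->
  FCprop (perm_mx sg *m A *m (perm_mx sg)^T).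
Proof.
move=> upA uA PM ND SW.
set Mp := perm_mx sg *m A *m (perm_mx sg)^T.
have Mp_e x y : Mp x y = A (sg x) (sg y) by rewrite /Mp PAPt_entry.
have detA : \det A = \prod_a A a a.
  apply: (@det_rank _ _ _ (fun a => n - a)%N) => a b nab Aab.
  have : ~~ (b < a)%N by apply: contra Aab => h; rewrite upA.
  have nab' : (a : nat) != b := nab.
  have := ltn_ord b; lia.
have diag x : Mp x x = 1.
  rewrite Mp_e; case: (F2_cases (A (sg x) (sg x))) => // h.
  move: uA; rewrite unitmxE detA unitfE => /prodf_neq0 /(_ (sg x) isT).
  by rewrite h eqxx.
have ancS a b : anc Mp a b -> (sg b < sg a)%N.
  case/andP => nab; rewrite Mp_e => h.
  rewrite ltn_neqAle; apply/andP; split.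
    apply/negP => /eqP e; move/negP: nab; apply; apply/eqP; apply: (@perm_inj _ sg); apply: val_inj; exact: (esym e).
  rewrite leqNgt; apply/negP => lt; move: h; by rewrite upA.
have fc3' a b : anc Mp a b -> ~~ anc Mp b a.
  move=> ab; apply/negP => /ancS ba; have := ancS _ _ ab; lia.
have notanc a b : a != b -> ~~ anc Mp b a -> Mp a b = 0.
  by move=> nab; rewrite /anc eq_sym nab /= F2_neq1 => /eqP.
have nancE a b : a != b -> ~~ anc Mp a b -> (Mp b a == 1) = false.
  by move=> nab; rewrite /anc nab /= => /negbTE.
constructor.
- exact: diag.
- move=> a b c ab bc; apply: contraT => nac.
  have nab : a != b by case/andP: ab.
  have nbc : b != c by case/andP: bc.
  have nac' : a != c by apply/eqP => e; have := ancS _ _ ab; have := ancS _ _ bc; rewrite e; lia.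
  apply: False_ind; apply: (forbidden PM ND SW nab nbc nac').
  + exact: notanc nab (fc3' _ _ ab).
  + by case/andP: bc => _ /eqP.
  + by case/andP: ab => _ ->; rewrite (nancE _ _ nac' nac).
- exact: fc3'.
- move=> a b c ac bc nab; apply: contraT; rewrite negb_or => /andP[nab1 nba1].
  have nbc : b != c by case/andP: bc.
  have nac : a != c by case/andP: ac.
  apply: False_ind; apply: (forbidden PM ND SW nab nbc nac).
  + exact: notanc nab nba1.
  + by case/andP: bc => _ /eqP.
  + by rewrite (nancE _ _ nab nab1); case/andP: ac => _ ->.
Qed.

Definition mk (p : 'M['F_2]_n * vertex n) : outmap n := [ffun v => p.1 *m (v + p.2)].

Lemma mk_inj : {in setX (FCset n) [set: vertex n] &, injective mk}.
Proof.
move=> [M1 s1] [M2 s2]; rewrite !inE /= !andbT => /FCP F1 /FCP F2 e.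
have ev v : M1 *m (v + s1) = M2 *m (v + s2).
  by have := congr1 (fun f : outmap n => f v) e; rewrite /mk !ffunE.
have e0 := ev 0; rewrite !add0r in e0.
have eM : M1 = M2.
  apply/matrixP => i j.
  have := ev (delta_mx j 0); rewrite !mulmxDr e0 => /addIr.
  by rewrite -!colE => /(congr1 (fun A : 'cV['F_2]_n => A i 0)); rewrite !mxE.
subst M2; congr (_, _).
by rewrite -[s1](mulKmx (FC_unit F1)) e0 mulKmx // FC_unit.
Qed.

End Final.

Theorem lemma10 (n : nat) :
  exists S : {set outmap n},
    (forall o : outmap n, o \in S <-> (matousek_type o /\ realizable o)) /\
    #|S| = (2 ^ n * (n.+1) ^ (n.-1))%N.
Proof.
exists [set mk p | p in setX (FCset n) [set: vertex n]]; split.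
  move=> o; split.
    case/imsetP => [[M s]]; rewrite !inE /= andbT => /FCP FM ->.
    by split; [exact: construct_matousek|exact: construct_realizable].
  case=> [[sg [A [s [upA uA oE]]]] [Mr [q [PM ND oSW]]]].
  apply/imsetP; exists (perm_mx sg *m A *m (perm_mx sg)^T, s).
    rewrite !inE andbT; apply/FCP; apply: (FC_of_matousek upA uA PM ND).
    by move=> v; rewrite -oSW.
  by apply/ffunP => v; rewrite ffunE.
rewrite card_in_imset; last exact: mk_inj.
by rewrite cardsX card_FC cardsT card_mx card_Fp // muln1 mulnC.
Qed.
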